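(* Let $L$ be a probability measure on $\mathbb{N}$ and $F:\mathbb{N}\to\mathbb{N}$ a function with $\max_ic_i\le F(n)$ for all $n\in\mathbb{N}$. Define $\mathbf g=(g_1,\dots,g_D):[0,1]^D\times\mathcal S\to\mathbb{R}^D$ by $$g_i(\mathbf x,\tau,a,u)=\frac{1}{F(\tau)}\Big[\sum_{j=1}^D\sum_{m=1}^\infty a_{jm}\mathbf 1_{\{u_{jm}\le x_j\}}\Big]-x_i .$$ Then there is a constant $K_c$ such that for all $\mathbf x,\mathbf z\in[0,1]^D$ and all $i=1,\dots,D$, $$\int_{\mathcal S}|g_i(\mathbf z,\tau,a,u)-g_i(\mathbf x,\tau,a,u)|\,\mathfrak A^{(i)}(d\tau,da)\,du\le K_c\|\mathbf x-\mathbf z\|.$$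
   Context: $D\in\mathbb{N}$; $c_{ij}\in\mathbb{N}_0$ ($i\ne j$) with $c_i:=\sum_{j\ne i}c_{ij}=\sum_{j\ne i}c_{ji}$. $\mathcal S=\mathbb{N}_0\times\mathbb{N}_0^{D\times\mathbb{N}}\times[0,1]^{D\times\mathbb{N}}$, $du$ is the product uniform (Lebesgue) measure on $[0,1]^{D\times\mathbb{N}}$, $\|\cdot\|$ the Euclidean norm, and $\mathfrak A^{(i)}(d\tau,da)=L(d\tau)A^{(i)}(\tau,da)$ where $A^{(i)}(\tau,\cdot)$ is the law of $(a_{jm}(\tau))_{j,m}$ for the Markov chain over $r=1,\dots,\tau$: $a_{im}(1)=1$ for $m\le F(1)-c_i$ (else $0$), for $j\ne i$ $a_{jm}(1)=1$ for $m\le c_{ji}$ (else $0$); from $r$ to $r+1$ each of $F(r+1)-c_i$ individuals independently picks family $(j,m)$ with probability $a_{jm}(r)/F(r)$, existing family sizes become the numbers of picks, and for each $j\ne i$ new families $a_{jm}(r+1)=1$, $c_{ji}r<m\le c_{ji}(r+1)$, are added. *)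

(* Defs.v *)
From HB Require Import structures.
From mathcomp Require Import all_boot all_order all_algebra.
From mathcomp Require Import all_classical all_reals all_analysis.
Set Implicit Arguments. Unset Strict Implicit. Unset Printing Implicit Defensive.
Import Order.TTheory GRing.Theory Num.Theory.
Local Open Scope classical_set_scope.
Local Open Scope ring_scope.

Section Defs.
Variable R : realType.
Variable D : nat.
Variable c : 'I_D -> 'I_D -> nat.

Definition csum (k : 'I_D) : nat := (\sum_(j < D | j != k) c k j)%N.

(* a state of the family-size chain: (j, m) |-> a_{jm}; index m = 0 unused *)
Definition state := 'I_D -> nat -> nat.

Variable F : nat -> nat.
Variable i : 'I_D.

Definition init_state : state := fun j m =>
  if j == i then (if (1 <= m <= F 1 - csum i)%N then 1%N else 0%N)
  else (if (1 <= m <= c j i)%N then 1%N else 0%N).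

(* all families that can be non-empty at step r (indices beyond carry a_{jm}=0) *)
Definition fams (r : nat) : seq ('I_D * nat) :=
  [seq (j, m) | j <- enum 'I_D, m <- iota 1 (F 1 + (\sum_(j < D) c j i) * r)%N].

Fixpoint seqs {T : Type} (n : nat) (l : seq T) : seq (seq T) :=
  match n with
  | 0 => [:: [::]]
  | n'.+1 => [seq x :: s | x <- l, s <- seqs n' l]
  end.

Definition newstate (r : nat) (s : seq ('I_D * nat)) : state := fun j m =>
  (count_mem (j, m) s +
   (if (j != i) && (c j i * r < m <= c j i * r.+1)%N then 1 else 0))%N.

(* one step r -> r+1: each of F(r+1) - c_i individuals independently picks
   family (j,m) with probability a_{jm}(r)/F(r); finitely supported law
   given as a list of (weight, outcome) *)
Definition transition (r : nat) (a : state) : seq (R * state) :=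
  [seq (\prod_(p <- s) ((a p.1 p.2)%:R / (F r)%:R), newstate r s)
  | s <- seqs (F r.+1 - csum i)%N (fams r)].

(* lawA n = law of (a_{jm}(n+1))_{j,m}, i.e. A^{(i)}(n+1, .) *)
Fixpoint lawA (n : nat) : seq (R * state) :=
  match n with
  | 0 => [:: (1, init_state)]
  | n'.+1 => flatten [seq [seq (q.1 * q'.1, q'.2) | q' <- transition n q.2]
                     | q <- lawA n']
  end.

End Defs.

Definition gfun (R : realType) (D : nat) (F : nat -> nat) (k : 'I_D)
    (x : 'I_D -> R) (tau : nat) (a : state D) (u : 'I_D -> nat -> R) : R :=
  (F tau)%:R^-1 *
    (\sum_(j < D) limn (fun n : nat => \sum_(1 <= m < n)
        ((a j m)%:R * (if u j m <= x j then 1 else 0) : R)))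
  - x k.

Definition eucl_norm (R : realType) (D : nat) (x : 'I_D -> R) : R :=
  Num.sqrt (\sum_(j < D) x j ^+ 2).

Definition mutually_independent (R : realType) (d : measure_display)
    (T : measurableType d) (P : probability T R) (I : eqType)
    (X : I -> T -> R) : Prop :=
  forall (s : seq I), uniq s ->
  forall B : I -> set R, (forall k, measurable (B k)) ->
  P (\bigcap_(k in [set` s]) (X k @^-1` B k)) =
  (\prod_(k <- s) P (X k @^-1` B k))%E.

(* Main.v *)
Require Import Defs.
From HB Require Import structures.
From mathcomp Require Import all_boot all_order all_algebra.
From mathcomp Require Import all_classical all_reals all_analysis.
From mathcomp Require Import measurable_realfun.
From mathcomp Require Import zify ring.
Import Order.TTheory GRing.Theory Num.Theory.
Local Open Scope classical_set_scope.
Local Open Scope ring_scope.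

Fixpoint allQ {T} (P : T -> Prop) (l : seq T) : Prop :=
  if l is x :: l' then P x /\ allQ P l' else True.

Lemma allQ_cat {T} (P : T -> Prop) l1 l2 : allQ P l1 -> allQ P l2 -> allQ P (l1 ++ l2).
Proof. by elim: l1 => //= x l IH [? ?] ?; split => //; apply: IH. Qed.

Lemma allQ_flatten_map {T U} (P : U -> Prop) (Q : T -> Prop) (g : T -> seq U) l :
  allQ Q l -> (forall q, Q q -> allQ P (g q)) -> allQ P (flatten (map g l)).
Proof.
elim: l => //= x l IH [Qx Ql] H; apply: allQ_cat; first exact: H.
exact: IH.
Qed.

Lemma allQ_map_in {T : eqType} {U} (P : U -> Prop) (f : T -> U) (l : seq T) :
  (forall s, s \in l -> P (f s)) -> allQ P (map f l).
Proof.
elim: l => //= x l IH H; split; first by apply: H; rewrite mem_head.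
by apply: IH => s sl; apply: H; rewrite inE sl orbT.
Qed.

Lemma allQ_map {T U} (P : U -> Prop) (f : T -> U) (l : seq T) :
  allQ (fun x => P (f x)) l -> allQ P (map f l).
Proof. by elim: l => //= x l IH [? ?]; split => //; apply: IH. Qed.

Lemma allQ_le_sum {T} {R : numDomainType} (f g : T -> R) l :
  allQ (fun q => f q <= g q) l -> \sum_(q <- l) f q <= \sum_(q <- l) g q.
Proof.
elim: l => [|x l IH] /=; first by rewrite !big_nil.
by move=> [h1 h2]; rewrite !big_cons lerD //; apply: IH.
Qed.

Lemma allQ_impl {T} (P Q : T -> Prop) l : (forall x, P x -> Q x) -> allQ P l -> allQ Q l.
Proof. by move=> H; elim: l => //= x l IH [? ?]; split; [apply: H|apply: IH]. Qed.

Lemma sum_itv_eq lo n a b : (a <= b)%N ->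
  (\sum_(m <- iota lo n) nat_of_bool (a < m <= b)%N = minn (lo + n) b.+1 - maxn lo a.+1)%N.
Proof.
elim: n lo => [|n IH] lo ab; first by rewrite big_nil; lia.
rewrite /= big_cons IH //.
case: (ltnP a lo) => h1; case: (leqP lo b) => h2 /=; lia.
Qed.

Lemma sum_itv lo n a b : (a <= b)%N ->
  (\sum_(m <- iota lo n) nat_of_bool (a < m <= b)%N <= b - a)%N.
Proof. by move=> ab; rewrite sum_itv_eq //; lia. Qed.

Lemma seqs_mem {T : eqType} k (l : seq T) s x : s \in seqs k l -> x \in s -> x \in l.
Proof.
elim: k s => [|k IH] s /=; first by rewrite inE => /eqP ->.
move=> /allpairsPdep [y [s' [yl s'k ->]]]; rewrite inE => /orP [/eqP ->//|].
exact: IH.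
Qed.

Lemma seqs_size {T : eqType} k (l : seq T) s : s \in seqs k l -> size s = k.
Proof.
elim: k s => [|k IH] s /=; first by rewrite inE => /eqP ->.
by move=> /allpairsPdep [y [s' [yl s'k ->]]] /=; rewrite (IH _ s'k).
Qed.

Lemma seqs_prod {T} {R : comSemiRingType} (f : T -> R) k l :
  \sum_(s <- seqs k l) \prod_(p <- s) f p = (\sum_(p <- l) f p) ^+ k.
Proof.
elim: k => [|k IH] /=; first by rewrite big_seq1 big_nil expr0.
rewrite big_allpairs_dep exprS -IH mulr_suml; apply: eq_bigr => x _.
by rewrite mulr_sumr; apply: eq_bigr => s _; rewrite big_cons.
Qed.

Lemma allQ_allpairs {S T U} (P : U -> Prop) (Q : S -> Prop) (f : S -> T -> U)
  (s : seq S) (t : S -> seq T) :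
  allQ Q s -> (forall x, Q x -> allQ P (map (f x) (t x))) ->
  allQ P [seq f x y | x <- s, y <- t x].
Proof.
elim: s => //= x s IH [Qx Qs] H; apply: allQ_cat; first exact: H.
exact: IH.
Qed.

Arguments seqs_mem {T k l s x}.
Arguments seqs_size {T k l s}.

Lemma sum_itv' lo n a b (f : nat -> nat) : (a <= b)%N ->
  (forall m, f m = if (a < m <= b)%N then 1%N else 0%N) ->
  (\sum_(m <- iota lo n) f m <= b - a)%N.
Proof.
move=> ab hf; under eq_bigr do rewrite hf; exact: sum_itv.
Qed.

Lemma sum_eq_count {T : eqType} (l : seq T) x :
  (\sum_(p <- l) nat_of_bool (x == p))%N = count_mem x l.
Proof. by elim: l => [|y l IH]; rewrite ?big_nil ?big_cons ?IH //= eq_sym. Qed.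

Lemma sum_count_le {T : eqType} (l s : seq T) : uniq l ->
  (\sum_(p <- l) count_mem p s <= size s)%N.
Proof.
move=> ul; elim: s => [|x s IH] /=.
  by rewrite big1.
rewrite big_split /= sum_eq_count count_uniq_mem //.
by case: (x \in l) => /=; lia.
Qed.

Section InvS.
Variables (D : nat) (c : 'I_D -> 'I_D -> nat) (F : nat -> nat) (i : 'I_D).
Hypothesis hbal_i : csum c i = (\sum_(j < D | j != i) c j i)%N.
Hypothesis hFi : forall n, (0 < n)%N -> (csum c i <= F n)%N.

Definition NN r := (F 1 + (\sum_(j < D) c j i) * r)%N.
Definition totS r (a : state D) := (\sum_(p <- fams c F i r) a p.1 p.2)%N.
Definition InvS r (a : state D) :=
  (forall j m, (NN r < m)%N -> a j m = 0%N) /\ (totS r a <= F r)%N.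

Lemma leq_cC j : (c j i <= \sum_(j < D) c j i)%N.
Proof. by rewrite (bigD1 j) //=; lia. Qed.

Lemma fams_mem r p : p \in fams c F i r -> (1 <= p.2 <= NN r)%N.
Proof.
by move=> /allpairsPdep [j [m [_ mi ->]]] /=; move: mi; rewrite mem_iota /NN; lia.
Qed.

Lemma fams_uniq r : uniq (fams c F i r).
Proof.
apply: allpairs_uniq_dep; first exact: enum_uniq.
  by move=> j _; exact: iota_uniq.
by move=> [j1 m1] [j2 m2] _ _ /= [e1 e2]; subst.
Qed.

Lemma sum_split_i (f : 'I_D -> nat) (A : nat) :
  (\sum_(j <- enum 'I_D) (if j == i then A else f j) = A + \sum_(j < D | j != i) f j)%N.
Proof.
rewrite enumT (bigD1 i) //= eqxx; congr (_ + _)%N.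
by apply: eq_bigr => j /negbTE ->.
Qed.

Lemma init_inv : InvS 1 (init_state c F i).
Proof.
split.
  move=> j m hm; rewrite /init_state.
  have := leq_cC j; move: hm; rewrite /NN.
  case: ifP => _; case: ifP => //; lia.
rewrite /totS big_allpairs_dep /=.
apply: (@leq_trans (\sum_(j <- enum 'I_D)
   (if j == i then F 1 - csum c i else c j i))%N).
  apply: leq_sum => j _.
  case: eqP => [->|ne].
    rewrite -[X in (_ <= X)%N]subn0.
    apply: (sum_itv' _ _ 0) => // m; by rewrite /init_state eqxx.
  rewrite -(subn0 (c j i)).
  apply: (sum_itv' _ _ 0) => // m.
  by rewrite /init_state; have /negbTE -> : j != i by apply/eqP.
rewrite sum_split_i -hbal_i; have := hFi 1 isT; lia.
Qed.

Lemma newstate_inv r s : (0 < r)%N ->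
  s \in seqs (F r.+1 - csum c i) (fams c F i r) -> InvS r.+1 (newstate c i r s).
Proof.
move=> r0 hs; split.
  move=> j m hm; rewrite /newstate.
  have -> : count_mem (j, m) s = 0%N.
    apply/count_memPn; apply/negP => /(seqs_mem hs) /fams_mem /=.
    move: hm; rewrite /NN; lia.
  have := leq_cC j => cj.
  have := leq_mul cj (leqnn r.+1).
  move: hm; rewrite /NN.
  case: ifP => //; move=> /andP [_ /andP [_ h]]; lia.
rewrite /totS /newstate big_split /=.
apply: (@leq_trans ((F r.+1 - csum c i) + csum c i)%N); last first.
  have := hFi r.+1 isT; lia.
apply: leq_add.
  by rewrite -(seqs_size hs); apply: sum_count_le; exact: fams_uniq.
rewrite big_allpairs_dep /=.
apply: (@leq_trans (\sum_(j <- enum 'I_D) (if j == i then 0 else c j i))%N).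
  apply: leq_sum => j _.
  case: eqP => [->|ne].
    by rewrite big1 // => m _; rewrite eqxx.
  have hne : (j != i) = true by apply/eqP.
  have hle : (c j i * r <= c j i * r.+1)%N by rewrite leq_mul2l leqnSn orbT.
  apply: (leq_trans (sum_itv' 1 _ (c j i * r) (c j i * r.+1) _ hle _)).
    by [].
  by rewrite mulnS addnK.
by rewrite sum_split_i -hbal_i.
Qed.

End InvS.
Arguments NN {D}.
Arguments totS {D}.
Arguments InvS {D}.

Section Law.
Variables (R : realType) (D : nat) (c : 'I_D -> 'I_D -> nat) (F : nat -> nat) (i : 'I_D).
Hypothesis hbal_i : csum c i = (\sum_(j < D | j != i) c j i)%N.
Hypothesis hF1 : forall n, (0 < n)%N -> (0 < F n)%N.
Hypothesis hFi : forall n, (0 < n)%N -> (csum c i <= F n)%N.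

Lemma trans_ge0 r a : allQ (fun q => 0 <= q.1) (transition R c F i r a).
Proof.
apply: allQ_map_in => s _ /=; apply: prodr_ge0 => p _.
by apply: divr_ge0; apply: ler0n.
Qed.

Lemma trans_sum r a : (0 < r)%N -> (totS c F i r a <= F r)%N ->
  \sum_(q <- transition R c F i r a) q.1 <= 1.
Proof.
move=> r0 ht; rewrite /transition big_map /= seqs_prod.
apply: exprn_ile1.
  by apply: sumr_ge0 => p _; apply: divr_ge0; apply: ler0n.
rewrite -mulr_suml -natr_sum -/(totS c F i r a).
have Fr : (0 < (F r)%:R :> R) by rewrite ltr0n hF1.
by rewrite ler_pdivrMr // mul1r ler_nat.
Qed.

Lemma lawA_ok n : allQ (fun q => 0 <= q.1 /\ InvS c F i n.+1 q.2) (lawA R c F i n)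
  /\ \sum_(q <- lawA R c F i n) q.1 <= 1.
Proof.
elim: n => [|n [IH1 IH2]].
  rewrite /= big_seq1; split => //; split => //; split => //.
  exact: init_inv.
split.
  rewrite [lawA R c F i n.+1]/=.
  apply: (@allQ_allpairs _ _ _ _ _ (fun q q' => (q.1 * q'.1, q'.2)) _ (fun q => transition R c F i n.+1 q.2) IH1) => q [q0 qI].
  rewrite /transition -map_comp; apply: allQ_map_in => s hs /=; split.
    apply: mulr_ge0 => //; apply: prodr_ge0 => p _.
    by apply: divr_ge0; apply: ler0n.
  exact: newstate_inv.
rewrite [lawA R c F i n.+1]/= big_allpairs_dep /=.
apply: le_trans IH2.
apply: (allQ_le_sum (fun q => \sum_(q' <- transition R c F i n.+1 q.2) q.1 * q'.1) (fun q => q.1)).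
apply: (allQ_impl _ _ _ _ IH1) => q [q0 qI] /=.
rewrite -mulr_sumr.
rewrite -[leRHS]mulr1; apply: ler_wpM2l => //.
by apply: trans_sum => //; case: qI.
Qed.

End Law.

Lemma int_mono (R : realType) d (T : measurableType d) (mu : {measure set T -> \bar R})
  (f g : T -> \bar R) : (forall t, (0 <= f t)%E) -> (forall t, (f t <= g t)%E) ->
  (\int[mu]_t f t <= \int[mu]_t g t)%E.
Proof.
move=> f0 fg; rewrite !ge0_integralTE //; last by move=> t; apply: le_trans (fg t).
apply: le_ereal_sup => _ [h hf <-]; exists h => //= t.
exact: le_trans (hf t) (fg t).
Qed.

Lemma unif_itv (R : realType) (l h : R) : l <= h ->
  (uniform_prob (@ltr01 R) [set` `]l, h]] <= (h - l)%:E)%E.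
Proof.
move=> lh; rewrite /uniform_prob.
apply: (@le_trans _ _ (\int[lebesgue_measure]_(x in [set` `]l, h]]) (cst 1%:E) x)%E).
  apply: ge0_le_integral => //.
  - by move=> x _; rewrite lee_fin uniform_pdf_ge0 // ltr01.
  - apply/measurable_realfun.measurable_EFinP; apply: measurable_funTS.
    exact: measurable_uniform_pdf.
  - move=> x _; rewrite lee_fin /uniform_pdf subr0 invr1.
    by case: ifP.
rewrite integral_cst // mul1e.
change (lebesgue_measure [set` `]l, h]] <= (h - l)%:E)%E.
rewrite lebesgue_measure_itv /= lte_fin.
case: ifP => _; first by rewrite -EFinD.
by rewrite lee_fin subr_ge0.
Qed.

Lemma limn_fin (R : realType) (f : nat -> R) N : (forall m, (N < m)%N -> f m = 0) ->
  limn (fun n => \sum_(1 <= m < n) f m) = \sum_(m <- iota 1 N) f m.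
Proof.
move=> hf; apply: lim_near_cst => //; exists N.+1 => // n /= hn.
rewrite /index_iota (_ : (n - 1 = N + (n - 1 - N))%N); last by lia.
rewrite iotaD big_cat /= [X in _ + X]big1_seq ?addr0 // => m /andP [_].
by rewrite mem_iota => hm; apply: hf; lia.
Qed.

Definition pl (D N : nat) : seq ('I_D * nat) := [seq (j, m) | j <- enum 'I_D, m <- iota 1 N].

Lemma gfun_fin (R : realType) D F (k : 'I_D) tau (a : state D) N (x : 'I_D -> R) u :
  (forall j m, (N < m)%N -> a j m = 0%N) ->
  gfun F k x tau a u = (F tau)%:R^-1 *
     \sum_(p <- pl D N) (a p.1 p.2)%:R * (if u p.1 p.2 <= x p.1 then 1 else 0) - x k.
Proof.
move=> ha; rewrite /gfun /pl big_allpairs_dep /= enumT; congr (_ * _ - _).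
apply: eq_bigr => j _; apply: limn_fin => m hm.
by rewrite ha // mul0r.
Qed.

Lemma ind_le (R : realType) (u l h : R) :
  `|(if u <= h then 1 else 0) - (if u <= l then 1 else 0)| <=
  (if (Num.min l h < u <= Num.max l h) then 1 else 0 : R).
Proof.
case hin : (Num.min l h < u <= Num.max l h).
  by case: (u <= h); case: (u <= l); rewrite ?subrr ?subr0 ?sub0r ?normrN ?normr1 ?normr0.
move/negbT: hin; rewrite negb_and -leNgt -ltNge le_min gt_max => /orP [].
  by move=> /andP [-> ->]; rewrite subrr normr0.
move=> /andP [hl hh].
by rewrite (leNgt u h) hh (leNgt u l) hl /= subrr normr0.
Qed.

Lemma maxmin (R : realType) (x z : R) : Num.max x z - Num.min x z = `|x - z|.
Proof.
case: leP => h.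
  by rewrite distrC ger0_norm // subr_ge0.
by rewrite ger0_norm // subr_ge0 ltW.
Qed.

Lemma comp_le_norm (R : realType) D (y : 'I_D -> R) j : `|y j| <= eucl_norm y.
Proof.
rewrite /eucl_norm -sqrtr_sqr; apply: ler_wsqrtr.
rewrite (bigD1 j) //= lerDl; apply: sumr_ge0 => l _; exact: sqr_ge0.
Qed.

Section StateBound.
Variables (R : realType) (D : nat) (dO : measure_display) (Omega : measurableType dO)
  (P : probability Omega R) (U : 'I_D -> nat -> {RV P >-> R}).
Hypothesis hU : forall j m (A : set R), measurable A ->
          distribution P (U j m) A = uniform_prob (@ltr01 R) A.

Lemma state_bound (F : nat -> nat) (k : 'I_D) tau (a : state D) N (x z : 'I_D -> R) :
  (forall j m, (N < m)%N -> a j m = 0%N) ->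
  (\int[P]_w (`| gfun F k z tau a (fun j m => U j m w)
              - gfun F k x tau a (fun j m => U j m w) |)%:E
   <= (((F tau)%:R^-1 * (\sum_(p <- pl D N) (a p.1 p.2)%:R) + 1)
        * eucl_norm (fun j => x j - z j))%:E)%E.
Proof.
move=> ha.
set Fi := (F tau)%:R^-1 : R.
have Fi0 : 0 <= Fi by rewrite invr_ge0 ler0n.
set nrm := eucl_norm (fun j => x j - z j).
pose I j := [set` `]Num.min (x j) (z j), Num.max (x j) (z j)]] : set R.
pose A (p : 'I_D * nat) := (U p.1 p.2) @^-1` I p.1.
have mA p : measurable (A p) by apply: measurable_funPTI; exact: measurable_itv.
have mind p : measurable_fun setT (fun w => (\1_(A p) w)%:E : \bar R).
  apply/measurable_realfun.measurable_EFinP.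
  exact: measurable_realfun.measurable_indic.
pose h w := (Fi%:E * (\sum_(p <- pl D N) ((a p.1 p.2)%:R%:E * (\1_(A p) w)%:E))
   + (`|z k - x k|)%:E)%E.
apply: (@le_trans _ _ (\int[P]_w h w)%E).
  apply: int_mono => w; first by rewrite lee_fin.
  have -> : h w = (Fi * (\sum_(p <- pl D N) (a p.1 p.2)%:R * \1_(A p) w)
                   + `|z k - x k|)%:E.
    rewrite /h EFinD EFinM -sumEFin; congr (_ + _)%E; congr (_ * _)%E.
  rewrite lee_fin (gfun_fin _ _ _ _ _ _ _ z _ ha) (gfun_fin _ _ _ _ _ _ _ x _ ha).
  have e : forall a b c d : R, (Fi * a - c) - (Fi * b - d) = Fi * (a - b) - (c - d).
    by move=> *; ring.
  rewrite e; apply: le_trans (ler_normB _ _) _; apply: lerD => //.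
  rewrite normrM ger0_norm //; apply: ler_wpM2l => //.
  rewrite -sumrB; apply: le_trans (ler_norm_sum _ _ _) _.
  apply: ler_sum => p _; rewrite -mulrBr normrM normr_nat.
  apply: ler_wpM2l => //; rewrite indicE.
  apply: le_trans (ind_le _ _ (x p.1) (z p.1)) _.
  case: (boolP (w \in A p)) => hw; first by case: ifP.
  case: ifP => // hh; exfalso; move/negP: hw; apply; apply: mem_set.
  by rewrite /A /I /preimage /= in_itv /= hh.
have m1 : measurable_fun setT (fun w =>
    (Fi%:E * (\sum_(p <- pl D N) ((a p.1 p.2)%:R%:E * (\1_(A p) w)%:E)))%E).
  apply: measurable_funeM; apply: emeasurable_sum => p.
  by apply: measurable_funeM; exact: mind.
have h1 p w : (0 <= (a p.1 p.2)%:R%:E * (\1_(A p) w)%:E :> \bar R)%E.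
  by apply: mule_ge0; rewrite lee_fin ?ler0n // indicE ler0n.
have h10 : forall w, setT w -> (0 <= Fi%:E *
    (\sum_(p <- pl D N) ((a p.1 p.2)%:R%:E * (\1_(A p) w)%:E)))%E.
  by move=> w _; apply: mule_ge0; [rewrite lee_fin | apply: sume_ge0 => p _].
rewrite /h ge0_integralD //.
rewrite integral_cst //. set PT := (X in (_ * X)%E).
have -> : PT = 1%E by exact: probability_setT. rewrite mule1.
rewrite ge0_integralZl //; last by move=> w _; apply: sume_ge0 => p _.
  2: by apply: emeasurable_sum => p; apply: measurable_funeM; exact: mind.
rewrite ge0_integral_sum //; last first.
  by move=> p; apply: measurable_funeM; exact: mind.
under eq_bigr do rewrite ge0_integralZl // ?integral_indic // ?setIT.
have hPA p : (P (A p) <= nrm%:E)%E.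
  rewrite /A (_ : P _ = distribution P (U p.1 p.2) (I p.1)) // hU; last first.
    exact: measurable_itv.
  have mm : Num.min (x p.1) (z p.1) <= Num.max (x p.1) (z p.1).
    by case: (leP (x p.1) (z p.1)) => [//|/ltW //].
  apply: le_trans (unif_itv _ _ _ mm) _.
  rewrite lee_fin maxmin; exact: (comp_le_norm _ _ (fun j => x j - z j) p.1).
have hs : (\sum_(p <- pl D N) ((a p.1 p.2)%:R%:E * P (A p))
   <= (\sum_(p <- pl D N) (a p.1 p.2)%:R * nrm)%:E)%E.
  rewrite -sumEFin; apply: lee_sum => p _; rewrite EFinM.
  by apply: lee_wpmul2l => //; rewrite lee_fin ler0n.
apply: le_trans (leeD (lee_wpmul2l _ hs) (lexx _)) _; first by rewrite lee_fin.
rewrite -EFinM -EFinD lee_fin -mulr_suml mulrDl mul1r mulrA lerD2l.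
by rewrite distrC; exact: (comp_le_norm _ _ (fun j => x j - z j) k).
Qed.

End StateBound.

Lemma allQ_lee_sum {T} {R : realType} (f g : T -> \bar R) l :
  allQ (fun q => (f q <= g q)%E) l -> (\sum_(q <- l) f q <= \sum_(q <- l) g q)%E.
Proof.
elim: l => [|x l IH] /=; first by rewrite !big_nil.
by move=> [h1 h2]; rewrite !big_cons leeD //; apply: IH.
Qed.

Theorem lemmaA1 (R : realType) (D : nat) (hD : (0 < D)%N)
  (c : 'I_D -> 'I_D -> nat)
  (hbal : forall k : 'I_D, csum c k = (\sum_(j < D | j != k) c j k)%N)
  (L : probability nat R) (hL0 : L [set 0%N] = 0%E)
  (F : nat -> nat) (hF1 : forall n, (0 < n)%N -> (0 < F n)%N)
  (hF : forall n, (0 < n)%N -> forall k : 'I_D, (csum c k <= F n)%N)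
  (dO : measure_display) (Omega : measurableType dO) (P : probability Omega R)
  (U : 'I_D -> nat -> {RV P >-> R})
  (hU : forall j m (A : set R), measurable A ->
          distribution P (U j m) A = uniform_prob (@ltr01 R) A)
  (hind : mutually_independent P (fun p : 'I_D * nat => (U p.1 p.2 : Omega -> R))) :
  exists Kc : R, forall x z : 'I_D -> R,
    (forall j, 0 <= x j <= 1) -> (forall j, 0 <= z j <= 1) ->
    forall k : 'I_D,
    (\int[L]_tau
       (\sum_(q <- lawA R c F k tau.-1)
          (q.1)%:E *
          \int[P]_w (`| gfun F k z tau q.2 (fun j m => U j m w)
                      - gfun F k x tau q.2 (fun j m => U j m w) |)%:E)
     <= (Kc * eucl_norm (fun j => x j - z j))%:E)%E.
Proof.
set Kc := 2 + (F 1)%:R * (F 0)%:R^-1 : R.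
exists Kc => x z _ _ k.
set nrm := eucl_norm (fun j => x j - z j).
have nrm0 : 0 <= nrm by apply: sqrtr_ge0.
have Kc0 : 0 <= Kc.
  by rewrite /Kc addr_ge0 // mulr_ge0 // ?invr_ge0 ler0n.
have hFk : forall n, (0 < n)%N -> (csum c k <= F n)%N by move=> n n0; exact: hF.
have key : forall tau,
  (0 <= \sum_(q <- lawA R c F k tau.-1)
          (q.1)%:E *
          \int[P]_w (`| gfun F k z tau q.2 (fun j m => U j m w)
                      - gfun F k x tau q.2 (fun j m => U j m w) |)%:E)%E /\
  (\sum_(q <- lawA R c F k tau.-1)
          (q.1)%:E *
          \int[P]_w (`| gfun F k z tau q.2 (fun j m => U j m w)
                      - gfun F k x tau q.2 (fun j m => U j m w) |)%:E
     <= (Kc * nrm)%:E)%E.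
  move=> tau.
  have [H1 H2] := @lawA_ok R D c F k (hbal k) hF1 hFk tau.-1.
  split.
    apply: (@le_trans _ _ (\sum_(q <- lawA R c F k tau.-1) (0 : \bar R))%E).
      by rewrite big1.
    apply: allQ_lee_sum; apply: (allQ_impl _ _ _ _ H1) => q [q0 _].
    by apply: mule_ge0; [rewrite lee_fin | apply: integral_ge0 => w _; rewrite lee_fin].
  apply: (@le_trans _ _ (\sum_(q <- lawA R c F k tau.-1) (q.1 * (Kc * nrm))%:E)%E).
    apply: allQ_lee_sum; apply: (allQ_impl _ _ _ _ H1) => q [q0 [qs qt]].
    rewrite EFinM; apply: lee_wpmul2l; first by rewrite lee_fin.
    apply: le_trans (@state_bound _ _ _ _ _ _ hU F k tau _ _ x z qs) _.
    rewrite lee_fin; apply: ler_wpM2r => //.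
    rewrite -natr_sum -/(totS c F k tau.-1.+1 q.2) /Kc.
    have ht : ((totS c F k tau.-1.+1 q.2)%:R <= (F tau.-1.+1)%:R :> R) by rewrite ler_nat.
    destruct tau as [|t]; simpl in ht |- *.
      rewrite addrC -addrA lerD2l -[X in X <= _]addr0 addrC lerD // ?ler01 //.
      by rewrite mulrC; apply: ler_wpM2r; rewrite ?invr_ge0 ?ler0n.
    have Ft : (0 < (F t.+1)%:R :> R) by rewrite ltr0n hF1.
    apply: (@le_trans _ _ 2); last by rewrite lerDl mulr_ge0 // ?invr_ge0 ler0n.
    rewrite (_ : 2 = 1 + 1) // lerD2r mulrC ler_pdivrMr // mul1r //.
  rewrite sumEFin lee_fin -mulr_suml.
  by rewrite -[leRHS]mul1r ler_wpM2r // mulr_ge0.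
apply: (@le_trans _ _ (\int[L]_tau (cst (Kc * nrm)%:E) tau)%E).
  apply: int_mono => tau; [exact: (key tau).1 | exact: (key tau).2].
rewrite integral_cst //.
set PT := (X in (_ * X)%E).
have -> : PT = 1%E by exact: probability_setT.
by rewrite mule1.
Qed.
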